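(* For every right-most path $\gamma$ in the triangular lattice $\mathbb{T}$, $$\frac{|\gamma|-1}{6}\le|\partial^+\gamma|\le 5|\gamma|.$$
   Context: $\mathbb{T}$ is the triangular lattice in $\mathbb{C}$ (vertices $\{x+ye^{\pi i/3}:x,y\in\mathbb{Z}\}$, edges between vertices at Euclidean distance $1$). A path $\gamma=(v_0,\dots,v_n)$ has $v_{i-1},v_i$ adjacent; its length is $|\gamma|=n$. Each edge gives two oriented edges $\langle u,v\rangle,\langle v,u\rangle$ (head of $\langle u,v\rangle$ is $v$). $\gamma$ is simple if it traverses each oriented edge at most once; if $v_0=v_n$ it is a circuit and indices are mod $n$. When $v_{i-1},v_{i+1}$ are defined, the right-boundary edges at $v_i$ are the oriented edges out of $v_i$ listed counterclockwise strictly after $\langle v_i,v_{i-1}\rangle$ and strictly before $\langle v_i,v_{i+1}\rangle$ (otherwise none); their heads are the right-boundary vertices of $v_i$; $\partial^+\gamma$ is the set of all right-boundary vertices of all $v_i$. $\gamma$ is right-most if it is simple, uses no vertex of $\partial^+\gamma$, and each $v_i$ with $v_{i-1},v_{i+1}$ defined has at least one right-boundary vertex. *)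

(* Defs.v *)
From mathcomp Require Import all_boot all_order all_algebra.
Set Implicit Arguments. Unset Strict Implicit. Unset Printing Implicit Defensive.
Import GRing.Theory Num.Theory.

(* Vertices of the triangular lattice: (x, y) : int * int stands for
   x + y * e^{i pi/3} in C. *)
Definition vtx := (int * int)%type.

Definition vadd (u w : vtx) : vtx := ((u.1 + w.1)%R, (u.2 + w.2)%R).

(* The six unit directions, listed counterclockwise starting at angle 0:
   1, w, w^2 = w - 1, -1, -w, 1 - w   (w = e^{i pi/3}). *)
Definition dvec (k : nat) : vtx :=
  match k %% 6 with
  | 0 => (1%R, 0%R)
  | 1 => (0%R, 1%R)
  | 2 => ((-1)%R, 1%R)
  | 3 => ((-1)%R, 0%R)
  | 4 => (0%R, (-1)%R)
  | _ => (1%R, (-1)%R)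
  end.

Definition adj (u v : vtx) : bool := has (fun k => v == vadd u (dvec k)) (iota 0 6).

Definition dir_of (u v : vtx) : nat := find (fun k => v == vadd u (dvec k)) (iota 0 6).

Definition is_path (p : seq vtx) : bool :=
  (0 < size p) && path adj (head (0%R, 0%R) p) (behead p).

Definition plen (p : seq vtx) : nat := (size p).-1.

Definition vat (p : seq vtx) (i : nat) : vtx := nth (0%R, 0%R) p i.

(* circuit: v_0 = v_n with n >= 1; indices are then taken mod n. *)
Definition is_circuit (p : seq vtx) : bool :=
  (0 < plen p) && (vat p 0 == vat p (plen p)).

(* Indices i for which v_{i-1}, v_{i+1} are defined. *)
Definition inner_idx (p : seq vtx) : seq nat :=
  if is_circuit p then iota 0 (plen p) else iota 1 (plen p).-1.

Definition vprev (p : seq vtx) (i : nat) : vtx :=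
  if is_circuit p then vat p ((i + plen p).-1 %% plen p) else vat p i.-1.

Definition vnext (p : seq vtx) (i : nat) : vtx :=
  if is_circuit p then vat p (i.+1 %% plen p) else vat p i.+1.

(* Number of counterclockwise steps (in 1..6) from <v_i,v_{i-1}> to
   <v_i,v_{i+1}>; 6 means the two oriented edges coincide (full turn). *)
Definition turn (p : seq vtx) (i : nat) : nat :=
  let din := dir_of (vat p i) (vprev p i) in
  let dout := dir_of (vat p i) (vnext p i) in
  ((dout + 6 - din + 5) %% 6).+1.

(* Right-boundary vertices of v_i: heads of the oriented edges out of v_i
   strictly after <v_i,v_{i-1}> and strictly before <v_i,v_{i+1}> ccw. *)
Definition rb_vertices (p : seq vtx) (i : nat) : seq vtx :=
  [seq vadd (vat p i) (dvec (dir_of (vat p i) (vprev p i) + k))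
     | k <- iota 1 (turn p i).-1].

Definition rboundary (p : seq vtx) : seq vtx :=
  undup (flatten [seq rb_vertices p i | i <- inner_idx p]).

Definition is_simple (p : seq vtx) : bool :=
  uniq [seq (vat p i, vat p i.+1) | i <- iota 0 (plen p)].

Definition rightmost (p : seq vtx) : bool :=
  [&& is_path p, is_simple p,
      all (fun w => w \notin p) (rboundary p)
    & all (fun i => 0 < size (rb_vertices p i)) (inner_idx p)].

(* Main.v *)
Require Import Defs.
From mathcomp Require Import all_boot all_order all_algebra.
From mathcomp Require Import zify.

Lemma sumn_map_le (T : Type) (f : T -> nat) c s :
  (forall x, f x <= c) -> sumn (map f s) <= c * size s.
Proof. by move=> H; elim: s => [|x s IH] //=; rewrite mulnS; exact: leq_add. Qed.

Lemma upper p : size (rboundary p) <= 5 * plen p.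
Proof.
rewrite /rboundary; apply: (leq_trans (size_undup _)).
rewrite size_flatten /shape -map_comp.
apply: (leq_trans (@sumn_map_le _ _ 5 _ _)).
  move=> i /=; rewrite size_map size_iota /turn.
  set m := (_ %% 6); have : m < 6 by apply: ltn_pmod.
  simpl; lia.
rewrite leq_mul2l /inner_idx; case: ifP => _; rewrite size_iota; lia.
Qed.

Lemma adj_sym u v : adj u v -> adj v u.
Proof.
case: u => a b; case/hasP => k; rewrite mem_iota => /andP[_ hk] /eqP ->.
apply/hasP.
case: k hk => [|[|[|[|[|[|k]]]]]] // _;
  [exists 3 | exists 4 | exists 5 | exists 0 | exists 1 | exists 2] => //;
  rewrite /vadd /dvec /=; apply/eqP; congr pair; lia.
Qed.

Lemma dir_spec u v : adj u v -> dir_of u v < 6 /\ v = vadd u (dvec (dir_of u v)).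
Proof.
move=> h.
have lt6 : dir_of u v < 6.
  by rewrite /dir_of -[6]/(size (iota 0 6)) -has_find.
split => //.
have := nth_find 0 h; rewrite nth_iota //= add0n => /eqP; exact.
Qed.

Lemma vadd_inj a b c : vadd a c = vadd b c -> a = b.
Proof.
case: a => a1 a2; case: b => b1 b2; case: c => c1 c2; rewrite /vadd /=.
by case=> h1 h2; congr pair; lia.
Qed.

Lemma dvec_mod k : dvec (k %% 6) = dvec k.
Proof. by rewrite /dvec modn_mod. Qed.

Lemma lower p : rightmost p -> (plen p).-1 <= 6 * size (rboundary p).
Proof.
case/and4P => hpath hsimp _ hrb.
have hadj : forall i, 0 < i < size p -> adj (vat p i.-1) (vat p i).
  move=> i /andP[i0 iN].
  move: hpath => /andP[_]; case: p iN {hsimp hrb} => [//|x s] /= iN.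
  move/(pathP (0%R, 0%R)) => H.
  rewrite /vat; case: i i0 iN => [//|k] _ /= iN; apply: H; by [].
set n := plen p.
have hsz : size p = n.+1.
  by move: hpath => /andP[h _]; rewrite /n /plen prednK.
have hprev : forall i, 0 < i < n -> vprev p i = vat p i.-1.
  move=> i /andP[i0 iN]; rewrite /vprev; case: ifP => // _.
  by rewrite -/n -(prednK i0) addSn /= modnDr modn_small // (prednK i0) ltnW.
have hinner : forall i, 0 < i < n -> i \in inner_idx p.
  move=> i /andP[i0 iN]; rewrite /inner_idx; case: ifP => _; rewrite mem_iota -/n.
    by rewrite iN.
  by rewrite i0 /= add1n prednK //; apply: leq_ltn_trans iN.
pose d i := dir_of (vat p i) (vat p i.-1).
have hd : forall i, 0 < i < n -> d i < 6 /\ vat p i.-1 = vadd (vat p i) (dvec (d i)).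
  move=> i /andP[i0 iN]; apply: dir_spec; apply: adj_sym; apply: hadj.
  by rewrite hsz i0 ltnW.
pose g i := (vadd (vat p i) (dvec (d i + 1)), (d i + 1) %% 6).
set I := iota 1 n.-1.
have memI : forall i, i \in I -> 0 < i < n.
  move=> i; rewrite mem_iota add1n => /andP[a b]; rewrite a /=; move: b.
  by case: (n) a => [|m] //; case: i.
have ginj : {in I &, injective g}.
  move=> i j /memI hi /memI hj [hw1 hw2 hk].
  have [di6 edi] := hd i hi; have [dj6 edj] := hd j hj.
  have ed : d i = d j.
    by move: hk di6 dj6; case: (d i) => [|[|[|[|[|[|?]]]]]];
      case: (d j) => [|[|[|[|[|[|?]]]]]].
  have evij : vat p i = vat p j.
    by apply: (@vadd_inj _ _ (dvec (d j + 1))); rewrite ed in hw1 hw2; rewrite /vadd hw1 hw2.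
  have eprev : vat p i.-1 = vat p j.-1 by rewrite edi edj evij ed.
  move: hsimp; rewrite /is_simple => /nth_uniq => U.
  have := U ((0,0),(0,0))%R i.-1 j.-1.
  rewrite size_map size_iota -/n.
  case/andP: hi => i0 iN; case/andP: hj => j0 jN.
  rewrite !(nth_map 0) ?size_iota -/n ?nth_iota; try lia.
  rewrite !add0n !prednK // eprev evij eqxx.
  move=> /(_ (ltnW iN) (ltnW jN)) /esym /eqP; lia.
have : size (map g I) <= size [seq (x, y) | x <- rboundary p, y <- iota 0 6].
  apply: uniq_leq_size; first by rewrite map_inj_in_uniq // /I iota_uniq.
  move=> z /mapP [i iI ->]; apply: allpairs_f; last by rewrite mem_iota ltn_pmod.
  have hi := memI i iI.
  rewrite mem_undup; apply/flatten_mapP; exists i; first exact: hinner.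
  have := allP hrb i (hinner i hi).
  rewrite /rb_vertices size_map size_iota => hpos.
  rewrite hprev //.
  apply/mapP; exists 1; first by rewrite mem_iota leqnn add1n prednK.
  by rewrite /d addnC.
by rewrite size_map size_iota size_allpairs size_iota mulnC.
Qed.

(* (|g| - 1)/6 <= |d+ g| <= 5 |g|, the left inequality written as
   |g| - 1 <= 6 |d+ g| (with truncated subtraction, harmless since lhs < 0
   only when |g| = 0). *)
Theorem lemma2p3 (p : seq vtx) :
  rightmost p ->
  (plen p).-1 <= 6 * size (rboundary p) /\ size (rboundary p) <= 5 * plen p.
Proof.
by move=> h; split; [exact: lower | exact: upper].
Qed.
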